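(* Let $\mathcal{D}$ be a DAG on vertex set $[p]$, let $\mathcal{V} \subseteq [p]$, and let $k \in \mathcal{V}$. If $F_{\mathcal{D}}(\mathcal{V}, k) > 0$, then $k \notin \mathrm{Maximal}(\mathcal{D}, \mathcal{V})$; equivalently, if no (proper) descendant of $k$ in $\mathcal{D}$ lies in $\mathcal{V}$, then $F_{\mathcal{D}}(\mathcal{V}, k) = 0$.
   Context: For a DAG $\mathcal{D}$ on $[p]$ and $i, j \in [p]$, $S \subseteq [p]\setminus\{i,j\}$, write $i \not\perp\!\!\!\perp_{\mathcal{D}} j \mid S$ if $i$ and $j$ are d-connected given $S$ in $\mathcal{D}$. For $\mathcal{V} \subseteq [p]$, the moral subgraph $\mathcal{M}_{\mathcal{V}}(\mathcal{D})$ is the undirected graph with vertex set $\mathcal{V}$ and edge set $\{ i - j : i \neq j \in \mathcal{V},\ i \not\perp\!\!\!\perp_{\mathcal{D}} j \mid \mathcal{V}\setminus\{i,j\}\}$. $\mathcal{G}[W]$ denotes the induced subgraph of an undirected graph $\mathcal{G}$ on $W$, and $\mathcal{V}\setminus k := \mathcal{V}\setminus\{k\}$. The fill edge set is $\mathcal{F}_{\mathcal{D}}(\mathcal{V}, k) = \mathcal{M}_{\mathcal{V}\setminus k}(\mathcal{D}) \setminus \mathcal{M}_{\mathcal{V}}(\mathcal{D})[\mathcal{V}\setminus k]$ and the fill score is $F_{\mathcal{D}}(\mathcal{V}, k) = |\mathcal{F}_{\mathcal{D}}(\mathcal{V}, k)|$. With $\mathrm{de}_{\mathcal{D}}(v)$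 the set of descendants of $v$ in $\mathcal{D}$ (nodes reachable from $v$ by a nonempty directed path, excluding $v$ itself), $\mathrm{Maximal}(\mathcal{D}, \mathcal{V}) := \{ v \in \mathcal{V} : \mathrm{de}_{\mathcal{D}}(v) \cap \mathcal{V} = \emptyset \}$. *)

(* Defs.v *)
From mathcomp Require Import all_boot.
From mathcomp Require Import boolp.
Set Implicit Arguments. Unset Strict Implicit. Unset Printing Implicit Defensive.

Section DAG.
Variable p : nat.
Implicit Types (D : rel 'I_p) (S V : {set 'I_p}) (i j k v w : 'I_p).

(* D x y means there is a directed edge x -> y. *)
Definition acyclic D : Prop := forall v, ~~ [exists w, D v w && connect D w v].

Definition desc D v : {set 'I_p} := [set w | [exists u, D v u && connect D u w]].

Definition adj D : rel 'I_p := fun x y => D x y || D y x.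

Definition collider D a b c : bool := D a b && D c b.

Definition anc_or_in D S b : bool := [exists s in S, connect D b s].

Definition dconn D i j S : Prop :=
  exists s : seq 'I_p,
    let q := i :: s in
    [/\ last i s = j, uniq q, path (adj D) i s &
      forall n, 0 < n < size s ->
        let a := nth i q n.-1 in let b := nth i q n in let c := nth i q n.+1 in
        (collider D a b c -> anc_or_in D S b) /\
        (~~ collider D a b c -> b \notin S)].

Definition moral_edge D V i j : bool :=
  [&& i != j, i \in V, j \in V & `[< dconn D i j (V :\ i :\ j) >]].

(* fill edge set F_D(V,k) = M_{V\k}(D) \ M_V(D)[V\k], as a set of
   unordered pairs {i,j} *)
Definition fill_edges D V k : {set {set 'I_p}} :=
  [set e : {set 'I_p} | [exists i, exists j,
      (e == [set i; j]) && moral_edge D (V :\ k) i j && ~~ moral_edge D V i j]].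

Definition fill_score D V k : nat := #|fill_edges D V k|.

Definition Maximal D V : {set 'I_p} := [set v in V | [disjoint desc D v & V]].

End DAG.

(* Main.v *)
Require Import Defs.
From mathcomp Require Import all_boot.
From mathcomp Require Import boolp.
From Stdlib Require Import Lia.
From mathcomp Require Import zify.

Section Pf.
Variables (p : nat) (D : rel 'I_p) (V : {set 'I_p}) (k : 'I_p).
Hypothesis hmax : [disjoint desc D k & V].

Lemma no_reach {w} : w \in V -> w != k -> connect D k w -> False.
Proof.
move=> wV wk /connectP [q hq hl].
case: q hq hl => [|u q] /= hq hl; first by rewrite hl eqxx in wk.
move/andP: hq => [Dku hq].
have wd : w \in desc D k.
  rewrite inE; apply/existsP; exists u; rewrite Dku /=.
  by apply/connectP; exists q.
by rewrite (disjointFr hmax wd) in wV.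
Qed.

Lemma main i j : i \in V -> j \in V -> i != k -> j != k ->
  dconn D i j (V :\ k :\ i :\ j) -> dconn D i j (V :\ i :\ j).
Proof.
move=> iV jV ik jk [q [hl hu hp hc]].
set f := fun m => nth i (i :: q) m.
set N := size q.
have hadj : forall m, m < N -> adj D (f m) (f m.+1).
  by move=> m mN; move/(pathP i): hp => /(_ m mN).
have coll : forall m, 0 < m < N -> D (f m.-1) (f m) -> D (f m.+1) (f m) ->
    connect D k (f m) -> False.
  move=> m hm h1 h2 ck.
  have := (hc m hm).1; rewrite /collider -/f h1 h2 => /(_ isT).
  move=> /existsP [s0 /andP [s0S cs]].
  move: s0S; rewrite !inE => /andP [_ /andP [_ /andP [s0k s0V]]].
  exact: (no_reach s0V s0k (connect_trans ck cs)).
have fN : f N = j by rewrite /f -hl -[last i q]/(last i (i :: q)) -(nth_last i (i :: q)).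
have fwd : forall t m, t = N - m -> 0 < m <= N -> D (f m.-1) (f m) ->
    connect D k (f m) -> False.
  elim=> [|t IH] m ht hm h1 ck.
    have mN : m = N by move: hm ht => /andP [_]; lia.
    by move: ck; rewrite mN fN; exact: no_reach.
  have mN : 0 < m < N by move: hm ht => /andP; lia.
  have := hadj m (proj2 (andP mN)); case/orP => h2.
    apply: (IH m.+1) => //; first lia.
      by move/andP: mN => [_ ->].
    exact: connect_trans ck (connect1 h2).
  exact: (coll m mN h1 h2 ck).
have bwd : forall m, m < N -> D (f m.+1) (f m) -> connect D k (f m) -> False.
  elim=> [|m IH] mN h1 ck.
    by move: ck; exact: no_reach.
  have := hadj m (ltnW mN); case/orP => h2.
    by apply: (coll m.+1) => //; rewrite mN.
  apply: IH (ltnW mN) h2 (connect_trans ck (connect1 h2)).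
exists q; split => // n hn /=.
have [hcol hnc] := hc n hn.
split.
  move=> /hcol /existsP [s0 /andP [s0S cs]]; apply/existsP; exists s0.
  by rewrite cs andbT; move: s0S; rewrite !inE => /and3P [-> -> /andP [_ ->]].
move=> nc; have := hnc nc; rewrite !inE.
case: (eqVneq (nth i (i :: q) n) k) => [bk|bk]; last first.
  by rewrite /= ?andTb.
exfalso.
move/andP: hn => [n0 nN].
have nS : n.-1.+1 = n by rewrite prednK.
have ab := hadj n.-1 ltac:(rewrite /N; lia).
have bc := hadj n nN.
rewrite nS in ab.
move: nc; rewrite /collider -/f.
case/orP: bc => bc.
  move=> _; apply: (fwd (N - n.+1) n.+1) => //.
  by apply: connect_trans (connect1 bc); rewrite /f bk.
case/orP: ab => ab.
  by rewrite ab bc.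
move=> _; apply: (bwd n.-1); first by rewrite /N; lia.
  by rewrite nS.
by apply: connect_trans (connect1 ab); rewrite /f bk.
Qed.
End Pf.
Theorem proposition3 (p : nat) (D : rel 'I_p) (V : {set 'I_p}) (k : 'I_p) :
  acyclic D -> k \in V -> 0 < fill_score D V k -> k \notin Maximal D V.
Proof.
move=> _ kV; rewrite /fill_score card_gt0 => /set0Pn [e].
rewrite inE => /existsP [i /existsP [j /andP [/andP [_ me1] nme]]].
apply/negP; rewrite inE kV /= => hmax.
move: me1 nme; rewrite /moral_edge !inE => /and4P [ij /andP [ik iV] /andP [jk jV] /asboolP h].
rewrite ij iV jV /=; apply/negP/negPn/asboolP.
exact: main hmax _ _ iV jV ik jk h.
Qed.
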